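(* Fix $n\ge1$. The collection of all left Beth–Wocjan maximally entangled bases $\mathrm{LBW}(L,H)$, where $L$ ranges over Latin squares of order $n$ and $H$ over Hadamard matrices of order $n$, coincides with the collection of all quantum Latin square maximally entangled bases $B(Q,(H,H,\dots,H))$, where $Q$ ranges over Latin squares of order $n$ and $H$ over Hadamard matrices of order $n$ (the same Hadamard used for every index).
   Context: $\{\ket k\}_{k=0}^{n-1}$ is the computational basis of $\mathbb C^n$ and $\ket{k,p}=\ket k\otimes\ket p$. A quantum Latin square (QLS) of order $n$ is an $n\times n$ array of vectors of $\mathbb C^n$ in which every row and column is an orthonormal basis; the entry in column $i$, row $j$ is $\ket{Q_{ij}}$. A Latin square is a QLS whose entries are all computational basis states. A Hadamard matrix of order $n$ is an $n\times n$ complex matrix $H$ with $|H_{ij}|=1$ and $HH^\dagger=H^\dagger H=nI_n$. Given a QLS $Q$ and Hadamards $(H_j)_{j=0}^{n-1}$, $B(Q,(H_j))$ is the indexed family $A_{ij}=\frac1{\sqrt n}\sum_{k}\ket k\otimes\ket{Q_{kj}}\bra kH_j\ket i$, $i,j\in\{0,\dots,n-1\}$. Given a Latin square $L$ and a Hadamard $H$, $\mathrm{LBW}(L,H)$ is the indexed family $B_{ij}=\frac1{\sqrt n}\sum_{k,p=0}^{n-1}\ket{k,p}\,H_{ik}\,\langle L_{kp}|j\rangle$, $i,j\in\{0,\dots,n-1\}$. *)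

(* Defs.v *)
From mathcomp Require Import all_boot all_algebra.
From mathcomp Require Export complex reals.
Set Implicit Arguments. Unset Strict Implicit. Unset Printing Implicit Defensive.
Import GRing.Theory Num.Theory.
Local Open Scope ring_scope.

Section QLS.
Variables (C : numClosedFieldType) (n : nat).

Definition ket (k : 'I_n) : 'cV[C]_n := delta_mx k 0.

Definition braket (u v : 'cV[C]_n) : C := \sum_(i < n) (u i 0)^* * v i 0.

(* vectors of C^n (x) C^n are represented by their coordinate matrix:
   entry (k,p) is the coefficient of |k,p> = |k> (x) |p> *)
Definition tens (u v : 'cV[C]_n) : 'M[C]_n := \matrix_(k, p) (u k 0 * v p 0).

Definition is_onb (f : 'I_n -> 'cV[C]_n) : Prop :=
  (forall a b, braket (f a) (f b) = (a == b)%:R) /\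
  row_full (\matrix_(a < n, i < n) f a i 0).

(* quantum Latin square: Q i j is the entry in column i, row j;
   every row and every column is an orthonormal basis *)
Definition is_QLS (Q : 'I_n -> 'I_n -> 'cV[C]_n) : Prop :=
  (forall j, is_onb (fun i => Q i j)) /\ (forall i, is_onb (fun j => Q i j)).

Definition is_LatinSquare (Q : 'I_n -> 'I_n -> 'cV[C]_n) : Prop :=
  is_QLS Q /\ (forall i j, exists k, Q i j = ket k).

Definition adj (H : 'M[C]_n) : 'M[C]_n := (map_mx Num.conj H)^T.

Definition is_Hadamard (H : 'M[C]_n) : Prop :=
  (forall i j, `|H i j| = 1) /\ H *m adj H = n%:R%:M /\ adj H *m H = n%:R%:M.

(* B(Q,(H_j)) : A_ij = 1/sqrt n sum_k |k> (x) |Q_kj> <k|H_j|i> *)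
Definition QLS_basis (Q : 'I_n -> 'I_n -> 'cV[C]_n) (Hs : 'I_n -> 'M[C]_n)
    (i j : 'I_n) : 'M[C]_n :=
  (sqrtC n%:R)^-1 *: \sum_(k < n) (Hs j k i) *: tens (ket k) (Q k j).

(* LBW(L,H) : B_ij = 1/sqrt n sum_{k,p} |k,p> H_ik <L_kp|j> *)
Definition LBW (L : 'I_n -> 'I_n -> 'cV[C]_n) (H : 'M[C]_n)
    (i j : 'I_n) : 'M[C]_n :=
  (sqrtC n%:R)^-1 *:
    \sum_(k < n) \sum_(p < n) (H i k * braket (L k p) (ket j)) *: tens (ket k) (ket p).

End QLS.

(* Main.v *)
Require Import Defs.
From mathcomp Require Import all_boot all_algebra all_fingroup.
From mathcomp Require Import complex reals.
Import GRing.Theory Num.Theory.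
Local Open Scope ring_scope.
Set Implicit Arguments. Unset Strict Implicit.
Section H.
Variables (C : numClosedFieldType) (n : nat).

Lemma ketE (a i : 'I_n) j : ket C a i j = (i == a)%:R.
Proof. by rewrite /ket mxE; case: j => [[]] //= ?; rewrite andbT. Qed.

Lemma braket_ket (a b : 'I_n) : braket (ket C a) (ket C b) = (a == b)%:R.
Proof.
rewrite /braket (bigD1 a) //= !ketE eqxx conjC1 mul1r big1 ?addr0.
  by rewrite eq_sym.
by move=> i /negbTE hi; rewrite !ketE hi conjC0 mul0r.
Qed.

Lemma onb_ket_inj (f : 'I_n -> 'I_n) :
  (forall a b, braket (ket C (f a)) (ket C (f b)) = (a == b)%:R) -> injective f.
Proof.
move=> h a b e; have := h a b; rewrite e braket_ket eqxx.
by case: eqP => //= _ /eqP; rewrite oner_eq0.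
Qed.

Lemma inj_onb_ket (f : 'I_n -> 'I_n) : injective f -> is_onb (fun a => ket C (f a)).
Proof.
move=> finj; split.
  by move=> a b; rewrite braket_ket (inj_eq finj).
have -> : (\matrix_(a < n, i < n) ket C (f a) i 0) = perm_mx (perm finj).
  by apply/matrixP => a i; rewrite !mxE permE andbT eq_sym.
by rewrite row_full_unit unitmx_perm.
Qed.

Definition LatF (l : 'I_n -> 'I_n -> 'I_n) :=
  (forall j, injective (fun i => l i j)) /\ (forall i, injective (l i)).

Lemma Latin_ex (L : 'I_n -> 'I_n -> 'cV[C]_n) : is_LatinSquare L ->
  exists l, LatF l /\ forall i j, L i j = ket C (l i j).
Proof.
move=> [[h1 h2] h3].
have [l hl] : exists l : 'I_n -> 'I_n -> 'I_n, forall i j, L i j = ket C (l i j).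
  have := fin_all_exists (fun i => fin_all_exists (h3 i)).
  by case=> l hl; exists l.
exists l; split => //; split.
  move=> j; apply: onb_ket_inj; have [hb hr] := h1 j.
  by move=> a b; rewrite -!hl.
move=> i; apply: onb_ket_inj; have [hb hr] := h2 i.
by move=> a b; rewrite -!hl.
Qed.

Lemma LatF_Latin l : LatF l -> is_LatinSquare (fun i j => ket C (l i j)).
Proof.
move=> [h1 h2]; split; last by move=> i j; exists (l i j).
split=> [j|i]; first exact: (@inj_onb_ket (fun i => l i j) (h1 j)).
exact: (@inj_onb_ket (l i) (h2 i)).
Qed.

Definition linv (l : 'I_n -> 'I_n -> 'I_n) k x : 'I_n :=
  odflt x [pick p | l k p == x].

Lemma linvP l k x : injective (l k) -> l k (linv l k x) = x.
Proof.
move=> hi; rewrite /linv; case: pickP => [p /eqP //|h].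
have [g _ gK] := injF_bij hi.
by have := h (g x); rewrite gK eqxx.
Qed.

Lemma linv_eq l k p j : injective (l k) -> (l k p == j) = (p == linv l k j).
Proof.
move=> hi; by rewrite -{1}(linvP j hi) (inj_eq hi).
Qed.

Lemma LatF_linv l : LatF l -> LatF (linv l).
Proof.
move=> [h1 h2]; split.
  move=> j a b e; apply: (h1 (linv l a j)).
  by rewrite /= {2}e !linvP.
move=> i a b e; by rewrite -(linvP a (h2 i)) e linvP.
Qed.

Lemma LBW_QLS l g (H : 'M[C]_n) : (forall k p j, (l k p == j) = (p == g k j)) ->
  forall i j, LBW (fun i j => ket C (l i j)) H i j =
              QLS_basis (fun i j => ket C (g i j)) (fun _ => H^T) i j.
Proof.
move=> hlg i j; rewrite /LBW /QLS_basis; congr (_ *: _).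
apply: eq_bigr => k _; rewrite mxE.
rewrite (bigD1 (g k j)) //= braket_ket.
have := hlg k (g k j) j; rewrite eqxx => ->; rewrite mulr1 big1 ?addr0 //.
move=> p /negbTE hp; rewrite braket_ket.
by have := hlg k p j; rewrite hp => ->; rewrite mulr0 scale0r.
Qed.

Lemma Had_tr (H : 'M[C]_n) : is_Hadamard H -> is_Hadamard H^T.
Proof.
move=> [h1 [h2 h3]]; have ea : adj H^T = map_mx Num.conj H.
  by rewrite /adj map_trmx trmxK.
split; first by move=> i j; rewrite mxE.
split.
  by rewrite ea -[map_mx _ H]trmxK -/(adj H) -trmx_mul h3 tr_scalar_mx.
by rewrite ea -[map_mx _ H]trmxK -/(adj H) -trmx_mul h2 tr_scalar_mx.
Qed.

End H.

Lemma LBW_ext (C : numClosedFieldType) n (L L' : 'I_n -> 'I_n -> 'cV[C]_n) H :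
  (forall i j, L i j = L' i j) -> forall i j, LBW L H i j = LBW L' H i j.
Proof.
move=> e i j; rewrite /LBW; congr (_ *: _); apply: eq_bigr => k _.
by apply: eq_bigr => p _; rewrite e.
Qed.

Lemma QLS_ext (C : numClosedFieldType) n (L L' : 'I_n -> 'I_n -> 'cV[C]_n) Hs :
  (forall i j, L i j = L' i j) -> forall i j, QLS_basis L Hs i j = QLS_basis L' Hs i j.
Proof.
move=> e i j; rewrite /QLS_basis; congr (_ *: _); apply: eq_bigr => k _.
by rewrite e.
Qed.

Local Open Scope complex_scope.

Theorem lemma24 (R : realType) (n : nat) (hn : (1 <= n)%N) :
  (forall (L : 'I_n -> 'I_n -> 'cV[R[i]]_n) (H : 'M[R[i]]_n),
     is_LatinSquare L -> is_Hadamard H ->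
     exists (Q : 'I_n -> 'I_n -> 'cV[R[i]]_n) (H' : 'M[R[i]]_n),
       is_LatinSquare Q /\ is_Hadamard H' /\
       forall i j, LBW L H i j = QLS_basis Q (fun _ => H') i j) /\
  (forall (Q : 'I_n -> 'I_n -> 'cV[R[i]]_n) (H : 'M[R[i]]_n),
     is_LatinSquare Q -> is_Hadamard H ->
     exists (L : 'I_n -> 'I_n -> 'cV[R[i]]_n) (H' : 'M[R[i]]_n),
       is_LatinSquare L /\ is_Hadamard H' /\
       forall i j, QLS_basis Q (fun _ => H) i j = LBW L H' i j).
Proof.
split.
  move=> L H hL hH; have [l [hl el]] := Latin_ex hL.
  exists (fun i j => ket _ (linv l i j)), H^T; split; first exact: LatF_Latin (LatF_linv hl).
  split; first exact: Had_tr.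
  move=> i j; rewrite (LBW_ext _ el); apply: LBW_QLS => k p j'.
  exact: linv_eq (proj2 hl k).
move=> Q H hQ hH; have [q [hq eq]] := Latin_ex hQ.
exists (fun i j => ket _ (linv q i j)), H^T; split; first exact: LatF_Latin (LatF_linv hq).
split; first exact: Had_tr.
move=> i j; rewrite (LBW_QLS (g := q)); last first.
  move=> k p j'; have := @linv_eq _ q k j' p (proj2 hq k).
  by rewrite eq_sym => ->; rewrite eq_sym.
by rewrite trmxK; apply: QLS_ext.
Qed.
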